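(* Let $A$ and $B$ be rings, $f: A\to B$ a ring homomorphism and $J$ a proper ideal of $B$ such that $J\subseteq\mathrm{nil}(B)$. Then $A\bowtie^{f}J$ is a weak Armendariz ring if and only if $A$ is a weak Armendariz ring.
   Context: All rings are associative with identity (not necessarily commutative), ring homomorphisms are unital, and ideals are two-sided. $\mathrm{nil}(R)$ denotes the set of nilpotent elements of a ring $R$. For a ring homomorphism $f:A\to B$ and an ideal $J$ of $B$, the amalgamation is the subring $A\bowtie^{f}J=\{(a,f(a)+j)\mid a\in A,\ j\in J\}$ of $A\times B$. A ring $R$ is weak Armendariz if whenever $p(x)=\sum_{i=0}^n a_ix^i$ and $q(x)=\sum_{j=0}^m b_jx^j$ in $R[x]$ satisfy $p(x)q(x)=0$, then $a_ib_j\in\mathrm{nil}(R)$ for all $i,j$. *)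

(* Defs.v *)
From HB Require Import structures.
From mathcomp Require Import all_boot all_order all_algebra.
Set Implicit Arguments. Unset Strict Implicit. Unset Printing Implicit Defensive.
Import GRing.Theory.
Local Open Scope ring_scope.

Definition nilpotent_elt (R : nzRingType) (x : R) : Prop := exists n : nat, x ^+ n = 0.

Definition weak_armendariz (R : nzRingType) : Prop :=
  forall p q : {poly R}, p * q = 0 ->
    forall i j : nat, nilpotent_elt (p`_i * q`_j).

Record tsideal (B : nzRingType) := Ideal {
  ideal_pred :> pred B;
  ideal0 : 0 \in ideal_pred;
  idealD : forall x y, x \in ideal_pred -> y \in ideal_pred -> x + y \in ideal_pred;
  idealN : forall x, x \in ideal_pred -> - x \in ideal_pred;
  idealMl : forall a x, x \in ideal_pred -> a * x \in ideal_pred;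
  idealMr : forall x a, x \in ideal_pred -> x * a \in ideal_pred }.

Definition proper_tsideal (B : nzRingType) (J : tsideal B) : Prop := (1 : B) \notin ideal_pred J.

Section Amalgamation.
Variables (A B : nzRingType) (f : {rmorphism A -> B}) (J : tsideal B).

(* carrier predicate of A ⋈^f J inside A × B: (a, b) with b - f a ∈ J,
   i.e. b = f a + j for some j ∈ J *)
Definition amalg_pred : pred (A * B) := fun x => x.2 - f x.1 \in ideal_pred J.

Lemma amalg_subring_closed : subring_closed amalg_pred.
Proof.
have memE x : (x \in amalg_pred) = (x.2 - f x.1 \in ideal_pred J) by [].
split.
- by rewrite memE /= rmorph1 subrr; apply: ideal0.
- move=> [a b] [c d]; rewrite !memE /= => H1 H2.
  have -> : b - d - f (a - c) = (b - f a) + - (d - f c).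
    by rewrite rmorphB !opprD !opprK addrACA.
  by apply: idealD => //; apply: idealN.
- move=> [a b] [c d]; rewrite !memE /= => H1 H2.
  have -> : b * d - f (a * c) = (b - f a) * d + f a * (d - f c).
    by rewrite rmorphM mulrBl mulrBr addrA subrK.
  by apply: idealD; [apply: idealMr | apply: idealMl].
Qed.

HB.instance Definition _ := GRing.isSubringClosed.Build (A * B)%type amalg_pred
  amalg_subring_closed.

Record amalgamation := Amalg { amalg_val :> A * B; _ : amalg_val \in amalg_pred }.

HB.instance Definition _ := [isSub for amalg_val].
HB.instance Definition _ := [Choice of amalgamation by <:].
HB.instance Definition _ := [SubChoice_isSubNzRing of amalgamation by <:].

End Amalgamation.

(* Main.v *)
Require Import Defs.
From HB Require Import structures.
From mathcomp Require Import all_boot all_order all_algebra.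
Import GRing.Theory.
Local Open Scope ring_scope.

Section Emb.
Variables (A B : nzRingType) (f : {rmorphism A -> B}) (J : tsideal B).

Lemma emb_mem (a : A) : (a, f a) \in amalg_pred f J.
Proof. by rewrite /amalg_pred /= -topredE /= subrr; apply: ideal0. Qed.

Definition emb (a : A) : amalgamation f J := Amalg (emb_mem a).

Lemma emb_zmod : zmod_morphism emb.
Proof. by move=> x y; apply: val_inj; rewrite /= rmorphB. Qed.

Lemma emb_monoid : monoid_morphism emb.
Proof.
split; first by apply: val_inj; rewrite /= rmorph1.
by move=> x y; apply: val_inj; rewrite /= rmorphM.
Qed.

HB.instance Definition _ := GRing.isZmodMorphism.Build _ _ emb emb_zmod.
HB.instance Definition _ := GRing.isMonoidMorphism.Build _ _ emb emb_monoid.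

End Emb.

Theorem theorem4p1 (A B : nzRingType) (f : {rmorphism A -> B}) (J : tsideal B)
  (hJ : proper_tsideal J)
  (hJnil : forall j : B, j \in ideal_pred J -> nilpotent_elt j) :
  weak_armendariz (amalgamation f J) <-> weak_armendariz A.
Proof.
split.
- move=> HC p q pq0 i j.
  have := HC (map_poly (@emb _ _ f J) p) (map_poly (@emb _ _ f J) q).
  rewrite -rmorphM pq0 rmorph0 => /(_ erefl i j) [n].
  rewrite !coef_map -rmorphM -rmorphXn => /(congr1 (fun x => (val x).1)) /=.
  by move=> h; exists n.
- move=> HA P Q PQ0 i j.
  pose p := map_poly fst (map_poly val P).
  pose q := map_poly fst (map_poly val Q).
  have pq0 : p * q = 0 by rewrite /p /q -!rmorphM PQ0 !rmorph0.
  have [n hn] := HA p q pq0 i j.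
  rewrite /p /q !coef_map /= in hn.
  set x := P`_i * Q`_j.
  have h1 : fst (val (x ^+ n)) = 0.
    by rewrite !rmorphXn !rmorphM.
  have hJx : (val (x ^+ n)).2 \in ideal_pred J.
    have := valP (x ^+ n); rewrite -topredE /= /amalg_pred h1 rmorph0 subr0.
    by [].
  have [m hm] := hJnil _ hJx.
  exists (n * m.+1)%N; rewrite exprM; apply: val_inj.
  rewrite rmorphXn rmorph0.
  rewrite [X in X ^+ _ = _](_ : _ = (0, (val (x ^+ n)).2)); last first.
    by rewrite -h1; exact: surjective_pairing.
  move: hm; set b := (val (x ^+ n)).2 => hm.
  rewrite exprSr; apply/eqP; rewrite xpair_eqE /= mulr0 eqxx /=.
  by rewrite (rmorphXn (@snd A B)) /= -exprSr exprS hm mulr0.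
Qed.
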